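(* Let $\mathbb{Z} = \langle g\rangle$ act freely and cospecially on a CAT(0) cube complex $X$ by combinatorial isometries. For every vertices $x,y\in \mathrm{Min}(g)$, there exists a unique bijection between $\mathrm{Sep}(x\mid gx)$ and $\mathrm{Sep}(y\mid gy)$ which maps each hyperplane to a hyperplane in the same $\langle g\rangle$-orbit.
   Context: $\mathrm{Sep}(A\mid B)$ denotes the set of hyperplanes separating $A$ from $B$. $\mathrm{Min}(g)$ is the subcomplex spanned by the vertices $x$ minimizing the combinatorial distance $d(x,gx)$. An action is cospecial if the quotient cube complex is special in the sense of Haglund–Wise. *)

(* Defs.v *)
(* A CAT(0) cube complex is encoded by its 1-skeleton, a median graph
   (Chepoi / Roller: 1-skeleta of CAT(0) cube complexes are exactly the
   median graphs, and the cube complex is recovered as the cube completion). *)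
From mathcomp Require Import all_boot.
From Stdlib Require Import Relations.Relation_Operators.

Set Implicit Arguments.
Unset Strict Implicit.
Unset Printing Implicit Defensive.

Section Defs.
Variables (V : Type) (adj : V -> V -> Prop).

Inductive walk : V -> V -> nat -> Prop :=
| walk0 x : walk x x 0
| walkS x y z n : adj x y -> walk y z n -> walk x z n.+1.

Definition is_dist (x y : V) (n : nat) : Prop :=
  walk x y n /\ forall m, walk x y m -> n <= m.

Definition between (x m y : V) : Prop :=
  exists a b, is_dist x m a /\ is_dist m y b /\ is_dist x y (a + b).

Definition median_graph : Prop :=
  [/\ (forall x y, adj x y -> adj y x),
      (forall x, ~ adj x x),
      (forall x y, exists n, walk x y n) &
      (forall x y z, exists! m, [/\ between x m y, between y m z & between x m z])].

(* a-b-d-c-a is a square: the edge (a,b) is opposite to (c,d) *)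
Definition sq (a b c d : V) : Prop :=
  [/\ adj a b, adj c d, adj a c, adj b d & (a <> d /\ b <> c)].

Definition ostep (e f : V * V) : Prop := sq e.1 e.2 f.1 f.2.
Definition ustep (e f : V * V) : Prop := ostep e f \/ f = (e.2, e.1).

Definition opar : V * V -> V * V -> Prop := clos_refl_sym_trans _ ostep.
Definition upar : V * V -> V * V -> Prop := clos_refl_sym_trans _ ustep.

(* the hyperplane dual to the edge e, as its set of (oriented) dual edges *)
Definition hyperplane_of (e : V * V) : V -> V -> Prop :=
  fun x y => adj x y /\ upar e (x, y).

Definition is_hyperplane (J : V -> V -> Prop) : Prop :=
  exists a b, adj a b /\ J = hyperplane_of (a, b).

(* J separates x and y: x and y lie in different components of X minus J,
   i.e. there is no edge path from x to y avoiding the edges dual to J *)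
Definition separates (J : V -> V -> Prop) (x y : V) : Prop :=
  ~ clos_refl_trans _ (fun u v => adj u v /\ ~ J u v) x y.

Definition Sep (x y : V) : Type :=
  {J : V -> V -> Prop | is_hyperplane J /\ separates J x y}.

Variable g : V -> V.

Definition automorphism : Prop :=
  bijective g /\ forall x y, adj x y <-> adj (g x) (g y).

Definition free_action : Prop := forall n x, 0 < n -> iter n g x <> x.

Definition gE (n : nat) (e : V * V) : V * V := (iter n g e.1, iter n g e.2).

(* the (unoriented) hyperplanes dual to e and f are in the same <g>-orbit,
   i.e. e and f are dual to the same hyperplane of X/<g> *)
Definition same_orbit_edge (e f : V * V) : Prop :=
  exists n, upar (gE n e) f \/ upar (gE n f) e.

Definition spans (v a b : V) : Prop :=
  [/\ adj v a, adj v b, a <> b & exists c, adj a c /\ adj b c /\ c <> v].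

(* X/<g> is special in the sense of Haglund-Wise, expressed in X *)
Definition cospecial : Prop :=
  [/\ (* hyperplanes of the quotient are 2-sided *)
      (forall a b n, adj a b -> ~ opar (gE n (a, b)) (b, a)),
      (* no self-intersecting hyperplane *)
      (forall p q r, spans p q r -> ~ same_orbit_edge (p, q) (p, r)),
      (* no directly self-osculating hyperplane *)
      (forall v a b n, adj v a -> adj v b -> a <> b -> ~ spans v a b ->
          ~ opar (gE n (v, a)) (v, b)) &
      (* no pair of interosculating hyperplanes *)
      (forall p q r v a b, spans p q r -> adj v a -> adj v b -> a <> b ->
          ~ spans v a b ->
          ~ (same_orbit_edge (p, q) (v, a) /\ same_orbit_edge (p, r) (v, b)))].

Definition in_Min (x : V) : Prop :=
  exists n, is_dist x (g x) n /\ forall z m, is_dist z (g z) m -> n <= m.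

Definition hyp_image (n : nat) (J : V -> V -> Prop) : V -> V -> Prop :=
  fun x y => exists a b, J a b /\ x = iter n g a /\ y = iter n g b.

Definition same_orbit_hyp (J J' : V -> V -> Prop) : Prop :=
  exists n, J' = hyp_image n J \/ J = hyp_image n J'.

End Defs.

(* Main.v *)
Require Import Defs.
From mathcomp Require Import all_boot zify.
From Stdlib Require Import Relations.Relation_Operators Classical FunctionalExtensionality PropExtensionality ProofIrrelevance ClassicalEpsilon.
From Stdlib Require List.

Set Implicit Arguments.
Unset Strict Implicit.
Unset Printing Implicit Defensive.

Lemma ex_min (P : nat -> Prop) : (exists n, P n) -> exists n, P n /\ forall m, P m -> n <= m.
Proof.
case=> n Pn; apply: NNPP => Hno.
have H : forall k m, m <= k -> ~ P m.
  elim=> [|k IH] m Hm Pm.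
    have m0 : m = 0 by lia.
    subst; apply: Hno; exists 0; split=> // m' _; lia.
  case: (leqP m k) => Hmk; first exact: IH Hmk Pm.
  have e : m = k.+1 by lia.
  subst; apply: Hno; exists k.+1; split=> // m' Pm'.
  case: (leqP k.+1 m') => // Hlt; exfalso; apply: (IH m') => //; lia.
exact: (H n n (leqnn n) Pn).
Qed.

Lemma rstT {A} {R : A -> A -> Prop} {x y z : A} :
  clos_refl_sym_trans A R x y -> clos_refl_sym_trans A R y z -> clos_refl_sym_trans A R x z.
Proof. exact: rst_trans. Qed.
Lemma rstS {A} {R : A -> A -> Prop} {x y : A} :
  clos_refl_sym_trans A R x y -> clos_refl_sym_trans A R y x.
Proof. exact: rst_sym. Qed.
Lemma rtT {A} {R : A -> A -> Prop} {x y z : A} :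
  clos_refl_trans A R x y -> clos_refl_trans A R y z -> clos_refl_trans A R x z.
Proof. exact: rt_trans. Qed.

Section Graph.
Variables (V : Type) (adj : V -> V -> Prop).
Hypothesis HX : median_graph adj.

Lemma adj_sym x y : adj x y -> adj y x. Proof. by case: HX => H _ _ _; apply: H. Qed.
Lemma adj_irr x : ~ adj x x. Proof. by case: HX. Qed.
Lemma conn x y : exists n, walk adj x y n. Proof. by case: HX. Qed.

Lemma walk_app x y z m n : walk adj x y m -> walk adj y z n -> walk adj x z (m + n).
Proof. elim=> [//|a b c k Hab _ IH] Hw; rewrite addSn; apply: walkS Hab (IH Hw). Qed.

Lemma walk_snoc x y z n : walk adj x y n -> adj y z -> walk adj x z n.+1.
Proof. move=> H1 H2; rewrite -addn1; apply: walk_app H1 _; apply: walkS H2 (walk0 _ _). Qed.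

Lemma walk_rev x y n : walk adj x y n -> walk adj y x n.
Proof. elim=> [a|a b c k Hab _ IH]; first exact: walk0. apply: walk_snoc IH (adj_sym Hab). Qed.

Lemma walk0_eq x y : walk adj x y 0 -> x = y.
Proof. by move=> H; inversion H. Qed.

Lemma walkS_inv x z n : walk adj x z n.+1 -> exists y, adj x y /\ walk adj y z n.
Proof. by move=> H; inversion H; subst; exists y. Qed.

Lemma walk1_adj x y : walk adj x y 1 -> adj x y.
Proof. by case/walkS_inv=> w [H1 /walk0_eq <-]. Qed.

Lemma dist_ex x y : exists n, is_dist adj x y n.
Proof. by have [n [H1 H2]] := ex_min (conn x y); exists n. Qed.

Definition d x y := proj1_sig (constructive_indefinite_description _ (dist_ex x y)).
Lemma d_spec x y : is_dist adj x y (d x y).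
Proof. by rewrite /d; case: constructive_indefinite_description. Qed.
Lemma d_walk x y : walk adj x y (d x y). Proof. by case: (d_spec x y). Qed.
Lemma d_min x y n : walk adj x y n -> d x y <= n. Proof. by case: (d_spec x y) => _; apply. Qed.
Lemma is_dist_d x y n : is_dist adj x y n -> n = d x y.
Proof. case=> H1 H2; have := H2 _ (d_walk x y); have := d_min H1; lia. Qed.

Lemma d_sym x y : d x y = d y x.
Proof. have := d_min (walk_rev (d_walk x y)); have := d_min (walk_rev (d_walk y x)); lia. Qed.
Lemma d_tri x y z : d x z <= d x y + d y z.
Proof. exact: d_min (walk_app (d_walk x y) (d_walk y z)). Qed.
Lemma d_0 x : d x x = 0. Proof. have := d_min (walk0 adj x); lia. Qed.
Lemma d_eq0 x y : d x y = 0 -> x = y.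
Proof. by move=> H; have := d_walk x y; rewrite H; apply: walk0_eq. Qed.
Lemma d_adj x y : adj x y -> d x y = 1.
Proof.
move=> H; have := d_min (walkS H (walk0 _ y)); case E: (d x y) => [|k]; last lia.
by move: (d_eq0 E) H => -> /adj_irr.
Qed.
Lemma d1_adj x y : d x y = 1 -> adj x y.
Proof. by move=> H; have := d_walk x y; rewrite H; apply: walk1_adj. Qed.

Definition Ib x m y := d x m + d m y = d x y.

Lemma Ib_between x m y : Ib x m y -> between adj x m y.
Proof. rewrite /Ib => H; exists (d x m), (d m y); rewrite H; split; [|split]; apply: d_spec. Qed.
Lemma between_Ib x m y : between adj x m y -> Ib x m y.
Proof. case=> a [b [H1 [H2 H3]]]; move: (is_dist_d H1) (is_dist_d H2) (is_dist_d H3); rewrite /Ib; lia. Qed.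

Lemma med_ex x y z : exists m, [/\ Ib x m y, Ib y m z & Ib x m z].
Proof.
case: HX => _ _ _ /(_ x y z) [m [[H1 H2 H3] _]].
by exists m; split; apply: between_Ib.
Qed.

Lemma med_uniq x y z m1 m2 :
  [/\ Ib x m1 y, Ib y m1 z & Ib x m1 z] -> [/\ Ib x m2 y, Ib y m2 z & Ib x m2 z] -> m1 = m2.
Proof.
case: HX => _ _ _ /(_ x y z) [m [_ U]] [A1 A2 A3] [B1 B2 B3].
have e1 := U m1 (And3 (Ib_between A1) (Ib_between A2) (Ib_between A3)).
have e2 := U m2 (And3 (Ib_between B1) (Ib_between B2) (Ib_between B3)).
by rewrite -e1 -e2.
Qed.

Lemma adj_dist a b z : adj a b -> d z b = (d z a).+1 \/ d z a = (d z b).+1.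
Proof.
move=> Hab; have [m [H1 H2 H3]] := med_ex z a b.
move: H2; rewrite /Ib (d_adj Hab).
case E1: (d a m) => [|k].
  move/d_eq0: E1 => em _; subst m; left; move: H3; rewrite /Ib (d_adj Hab); lia.
case E2: (d m b) => [|k']; last lia.
move/d_eq0: E2 => em _; subst m; right; move: H1; rewrite /Ib d_sym (d_adj (adj_sym Hab)); lia.
Qed.

Lemma d_adj_le x y z : adj y z -> d x z <= (d x y).+1.
Proof. move=> H; have := d_tri x y z; rewrite (d_adj H); lia. Qed.

Lemma d_adj_le2 x y z : adj y z -> d z x <= (d y x).+1.
Proof. by move=> H; rewrite d_sym [d y x]d_sym; apply: d_adj_le. Qed.

Lemma two_nbrs p q r : adj p q -> adj p r -> q <> r -> d q r = 2.
Proof.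
move=> H1 H2 H3; have := d_tri q p r; rewrite [d q p]d_sym (d_adj H1) (d_adj H2).
case E: (d q r) => [|[|k]] Hle; last lia.
- by case: H3; apply: d_eq0.
- have := adj_dist p (d1_adj E); rewrite (d_adj H1) (d_adj H2); lia.
Qed.

Lemma quad u x y z k : d u x = k -> d u y = k -> adj x z -> adj y z -> x <> y ->
  exists w, [/\ adj x w, adj y w & (d u w).+1 = k].
Proof.
move=> Hx Hy Hxz Hyz Hxy.
have Hd : d x y = 2 by apply: (two_nbrs (adj_sym Hxz) (adj_sym Hyz) Hxy).
have [m [H1 H2 H3]] := med_ex x y u.
move: H1 H2 H3; rewrite /Ib Hd.
case E1: (d x m) => [|k1].
  move/d_eq0: E1 => em; subst m; move: (d_sym x u) (d_sym y u) (d_sym x y) (d_sym y x); lia.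
case E2: (d m y) => [|k2].
  move/d_eq0: E2 => em; subst m; move: (d_sym x u) (d_sym y u) (d_sym x y) (d_sym y x); lia.
move=> H1 H2 H3; have e1 : d x m = 1 by lia.
have e2 : d m y = 1 by lia.
exists m; split.
- exact: d1_adj.
- by apply: d1_adj; rewrite d_sym.
- move: H3; rewrite [d x u]d_sym Hx [d m u]d_sym; lia.
Qed.

Definition Wh a b z := d z a < d z b.

Lemma Wh_compl a b z : adj a b -> ~ Wh a b z <-> Wh b a z.
Proof. move=> H; rewrite /Wh; have := adj_dist z H; split; lia. Qed.

Lemma cut_dists a b u v : adj a b -> adj u v -> Wh a b u -> ~ Wh a b v ->
  [/\ d v a = (d u a).+1, d u b = (d u a).+1 & d v b = d u a].
Proof.
rewrite /Wh => Hab Huv Hu Hv.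
have := adj_dist u Hab; have := adj_dist v Hab.
have := d_adj_le a Huv; have := d_adj_le a (adj_sym Huv).
have := d_adj_le b Huv; have := d_adj_le b (adj_sym Huv).
rewrite ![d a _]d_sym ![d b _]d_sym => *; split; lia.
Qed.

Lemma cut_opar a b : adj a b -> forall u v, adj u v -> Wh a b u -> ~ Wh a b v ->
  opar adj (a, b) (u, v).
Proof.
move=> Hab.
suff H : forall n u v, d u a <= n -> adj u v -> Wh a b u -> ~ Wh a b v -> opar adj (a, b) (u, v).
  by move=> u v; apply: H (leqnn _).
elim=> [|n IH] u v Hn Huv Hu Hv; have [E1 E2 E3] := cut_dists Hab Huv Hu Hv.
  have u0 : d u a = 0 by lia.
  move/d_eq0: (u0) => eu; rewrite u0 in E3; move/d_eq0: E3 => ev; subst; exact: rst_refl.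
case E: (d u a) => [|k].
  move/d_eq0: (E) => eu; rewrite E in E3; move/d_eq0: E3 => ev; subst; exact: rst_refl.
have := d_walk u a; rewrite E => /walkS_inv [u' [Huu' Hw]].
have Hu'a : d u' a = k by have := d_min Hw; have := d_adj_le2 a (adj_sym Huu'); lia.
have Hu'b : d u' b = k.+1.
  have := d_adj_le2 b (adj_sym Huu'); have := d_tri u' a b; rewrite (d_adj Hab); lia.
have Hvu' : v <> u' by move=> e; subst; lia.
have Hbv : d b v = k.+1 by rewrite d_sym; lia.
have Hbu' : d b u' = k.+1 by rewrite d_sym; lia.
have [w [Hvw Hu'w Hwb]] := quad Hbv Hbu' (adj_sym Huv) (adj_sym Huu') Hvu'.
rewrite d_sym in Hwb.
have Hwa : d w a = k.+1.
  have := d_adj_le2 a Hu'w; have := d_adj_le2 a (adj_sym Hvw); lia.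
have IH' := IH u' w (ltac:(lia)) Hu'w (ltac:(rewrite /Wh; lia)) (ltac:(rewrite /Wh; lia)).
apply: rstT IH' _; apply: rstS; apply: rst_step.
rewrite /ostep /sq /=; split=> //; split=> e; subst; lia.
Qed.

Lemma sq_side a b p q r s : adj a b -> sq adj p q r s -> Wh a b p -> ~ Wh a b q -> Wh a b r.
Proof.
move=> Hab [Hpq Hrs Hpr Hqs [Hps Hqr]] Hp Hq; apply: NNPP => Hr.
have [Q1 Q2 Q3] := cut_dists Hab Hpq Hp Hq.
have [R1 R2 R3] := cut_dists Hab Hpr Hp Hr.
have Dqr := two_nbrs Hpq Hpr Hqr.
have [Sa|Sa] := adj_dist a Hqs; rewrite ![d a _]d_sym in Sa.
-
  have Sb : d s b = (d p a).+1.
    have := adj_dist b Hqs; have := d_tri s b a; rewrite (d_adj (adj_sym Hab)).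
    rewrite ![d b _]d_sym; lia.
  have Hbq : d b q = d p a by rewrite d_sym.
  have Hbr : d b r = d p a by rewrite d_sym.
  have [w [Hqw Hrw Hwb]] := quad Hbq Hbr (adj_sym Hpq) (adj_sym Hpr) Hqr.
  rewrite d_sym in Hwb.
  have Hpw : p <> w by move=> e; subst; lia.
  have Hsw : s <> w by move=> e; subst; lia.
  have Dps := two_nbrs (adj_sym Hpq) Hqs Hps.
  have Dpw := two_nbrs (adj_sym Hpq) Hqw Hpw.
  have Dsw := two_nbrs Hqs Hqw Hsw.
  apply: Hqr; apply: (@med_uniq p s w).
    move: (d_adj Hpq) (d_adj Hqs) (d_adj Hqw) (d_adj (adj_sym Hqs)) (d_sym s w) (d_sym p w) (d_sym p s).
    rewrite /Ib => *; split; lia.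
  move: (d_adj Hpr) (d_adj Hrs) (d_adj Hrw) (d_adj (adj_sym Hrs)) (d_sym s w) (d_sym p w) (d_sym p s).
  rewrite /Ib => *; split; lia.
-
  have Hsa : d s a = d p a by lia.
  apply: Hps; apply: (@med_uniq q r a).
    move: (d_adj Hpq) (d_adj Hpr) (d_adj (adj_sym Hpq)) (d_adj (adj_sym Hpr)) (d_sym r q).
    rewrite /Ib => *; split; lia.
  move: (d_adj Hqs) (d_adj Hrs) (d_adj (adj_sym Hqs)) (d_adj (adj_sym Hrs)) (d_sym r q).
  rewrite /Ib => *; split; lia.
Qed.


Lemma sq_swap p q r s : sq adj p q r s -> sq adj q p s r.
Proof. case=> H1 H2 H3 H4 [H5 H6]; split; [exact: adj_sym H1|exact: adj_sym H2|exact: H4|exact: H3|by split]. Qed.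
Lemma sq_flip p q r s : sq adj p q r s -> sq adj r s p q.
Proof. case=> H1 H2 H3 H4 [H5 H6]; split; [exact: H2|exact: H1|exact: adj_sym H3|exact: adj_sym H4|by split=> e; subst]. Qed.

Definition cutp a b (e : V * V) :=
  (Wh a b e.1 /\ ~ Wh a b e.2) \/ (~ Wh a b e.1 /\ Wh a b e.2).

Lemma ostep_cut a b e f : adj a b -> ostep adj e f -> cutp a b e -> cutp a b f.
Proof.
case: e f => p q [r s] Hab; rewrite /ostep /cutp /= => Hsq.
have C1 : forall z, ~ Wh a b z <-> Wh b a z := fun z => Wh_compl z Hab.
case=> [[Hp Hq]|[Hp Hq]].
- left; split; first exact: sq_side Hab Hsq Hp Hq.
  move=> Hs; have := sq_side (adj_sym Hab) (sq_swap Hsq) (proj1 (C1 q) Hq).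
  move/(_ (fun H => proj2 (C1 p) H Hp)) => /(proj2 (C1 s)); exact.
- right; split.
  + move=> Hr; have := sq_side (adj_sym Hab) Hsq (proj1 (C1 p) Hp).
    by move/(_ (fun H => proj2 (C1 q) H Hq)) => /(proj2 (C1 r)).
  + exact: sq_side Hab (sq_swap Hsq) Hq Hp.
Qed.

Lemma upar_cut a b e f : adj a b -> upar adj e f -> (cutp a b e <-> cutp a b f).
Proof.
move=> Hab; elim=> {e f} [e f [H|->]| e | e f _ IH | e f g _ IH1 _ IH2].
- split; first exact: ostep_cut.
  move=> Hf; apply: (ostep_cut Hab _ Hf).
  by case: e f H {Hf} => ? ? [? ?]; rewrite /ostep /=; apply: sq_flip.
- by case: e => p q; rewrite /cutp /=; split; case=> [[? ?]|[? ?]]; auto.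
- by [].
- by symmetry.
- by rewrite IH1.
Qed.

Lemma opar_upar e f : opar adj e f -> upar adj e f.
Proof.
elim=> {e f} [e f H|e|e f _ IH|e f g _ IH1 _ IH2].
- by apply: rst_step; left.
- exact: rst_refl.
- exact: rstS.
- exact: rstT IH2.
Qed.

Lemma Wh_ab a b : adj a b -> Wh a b a /\ ~ Wh a b b.
Proof. move=> H; move: (d_adj H) (d_adj (adj_sym H)) (d_0 a) (d_0 b); rewrite /Wh => *; split; lia. Qed.

Lemma hyp_cut a b u v : adj a b -> hyperplane_of adj (a, b) u v -> cutp a b (u, v).
Proof.
move=> Hab [_ H]; apply/(upar_cut Hab H); left; exact: Wh_ab.
Qed.

Lemma upar_rev e : upar adj e (e.2, e.1).
Proof. by apply: rst_step; right. Qed.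

Lemma cut_hyp a b u v : adj a b -> adj u v -> cutp a b (u, v) -> hyperplane_of adj (a, b) u v.
Proof.
move=> Hab Huv; split=> //; case: H => [[H1 H2]|[H1 H2]].
- exact: opar_upar (cut_opar Hab Huv H1 H2).
- apply: rstT (opar_upar (cut_opar Hab (adj_sym Huv) H2 H1)) _.
  exact: (upar_rev (v, u)).
Qed.


Lemma crt_sym (R : V -> V -> Prop) : (forall s t, R s t -> R t s) ->
  forall u v, clos_refl_trans _ R u v -> clos_refl_trans _ R v u.
Proof.
move=> HR u v; elim=> [s t H|s|s t w _ IH1 _ IH2].
- by apply: rt_step; apply: HR.
- exact: rt_refl.
- exact: rtT IH2 IH1.
Qed.

Lemma crt_mono (R R' : V -> V -> Prop) : (forall s t, R s t -> R' s t) ->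
  forall u v, clos_refl_trans _ R u v -> clos_refl_trans _ R' u v.
Proof.
move=> HR u v; elim=> [s t H|s|s t w _ IH1 _ IH2].
- by apply: rt_step; apply: HR.
- exact: rt_refl.
- exact: rtT IH1 IH2.
Qed.

Lemma side_path a b u : adj a b -> Wh a b u ->
  clos_refl_trans _ (fun s t => adj s t /\ Wh a b s /\ Wh a b t) u a.
Proof.
move=> Hab; move Hn: (d u a) => n; elim: n u Hn => [|n IH] u Hn Hu.
  by move/d_eq0: Hn => ->; apply: rt_refl.
have := d_walk u a; rewrite Hn => /walkS_inv [u' [Huu' Hw]].
have Hu'a : d u' a = n by have := d_min Hw; have := d_adj_le2 a (adj_sym Huu'); lia.
have Hu' : Wh a b u'.
  move: Hu; rewrite /Wh; have := d_adj_le2 b (adj_sym Huu'); lia.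
apply: rtT (IH u' Hu'a Hu'); apply: rt_step; split=> //.
Qed.

Lemma hyp_symm e s t : hyperplane_of adj e s t -> hyperplane_of adj e t s.
Proof.
case=> H1 H2; split; first exact: adj_sym.
apply: rstT H2 _; exact: (upar_rev (s, t)).
Qed.

Lemma sepE a b u v : adj a b ->
  (separates adj (hyperplane_of adj (a, b)) u v <-> ~ (Wh a b u <-> Wh a b v)).
Proof.
move=> Hab; split.
- move=> Hs Heq; apply: Hs.
  have RS : forall s t, (adj s t /\ ~ hyperplane_of adj (a, b) s t) ->
                       (adj t s /\ ~ hyperplane_of adj (a, b) t s).
    move=> s t [Hst Hn]; split; first exact: adj_sym.
    by move=> /hyp_symm.
  case: (classic (Wh a b u)) => Hu.
  + have Hv : Wh a b v by tauto.
    have M : forall s t, adj s t /\ Wh a b s /\ Wh a b t ->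
                         adj s t /\ ~ hyperplane_of adj (a, b) s t.
      move=> s t [Hst [Hs Ht]]; split=> // /(hyp_cut Hab); rewrite /cutp /=; tauto.
    exact: rtT (crt_mono M (side_path Hab Hu)) (crt_sym RS (crt_mono M (side_path Hab Hv))).
  + have Hv : ~ Wh a b v by tauto.
    have Hu' := proj1 (Wh_compl u Hab) Hu; have Hv' := proj1 (Wh_compl v Hab) Hv.
    have M : forall s t, adj s t /\ Wh b a s /\ Wh b a t ->
                         adj s t /\ ~ hyperplane_of adj (a, b) s t.
      move=> s t [Hst [Hs Ht]]; split=> // /(hyp_cut Hab); rewrite /cutp /=.
      move: Hs Ht; rewrite -!(Wh_compl _ Hab); tauto.
    have Hba := adj_sym Hab.
    exact: rtT (crt_mono M (side_path Hba Hu')) (crt_sym RS (crt_mono M (side_path Hba Hv'))).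
- move=> Hx Hpath; apply: Hx; elim: Hpath => [s t [Hst Hn]|s|s t w _ IH1 _ IH2].
  + apply: NNPP => Hne; apply: Hn; apply: cut_hyp Hab Hst _.
    rewrite /cutp /=; case: (classic (Wh a b s)); case: (classic (Wh a b t)); tauto.
  + tauto.
  + tauto.
Qed.

Lemma hyp_eq e f : upar adj e f -> hyperplane_of adj e = hyperplane_of adj f.
Proof.
move=> H; apply: functional_extensionality => s; apply: functional_extensionality => t.
apply: propositional_extensionality; split=> [[H1 H2]|[H1 H2]]; split=> //.
- exact: rstT (rstS H) H2.
- exact: rstT H H2.
Qed.

Lemma sep_xor J u v w : is_hyperplane adj J ->
  (separates adj J u w <-> ~ (separates adj J u v <-> separates adj J v w)).
Proof.
case=> a [b [Hab ->]]; rewrite !sepE //.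
case: (classic (Wh a b u)); case: (classic (Wh a b v)); case: (classic (Wh a b w)); tauto.
Qed.

Arguments sep_xor [J] u v w _.

Lemma nsep_refl J u : is_hyperplane adj J -> ~ separates adj J u u.
Proof. case=> a [b [Hab ->]]; rewrite sepE //; tauto. Qed.

Arguments nsep_refl [J] u _.

Lemma sep_symE J u v : is_hyperplane adj J -> (separates adj J u v <-> separates adj J v u).
Proof. case=> a [b [Hab ->]]; rewrite !sepE //; tauto. Qed.

Arguments sep_symE [J] u v _.

Lemma sep_adj_eq J u w : is_hyperplane adj J -> adj u w -> separates adj J u w ->
  J = hyperplane_of adj (u, w).
Proof.
case=> a [b [Hab ->]] Huw; rewrite sepE // => H.
have Hc : cutp a b (u, w).
  rewrite /cutp /=; case: (classic (Wh a b u)); case: (classic (Wh a b w)); tauto.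
have [_ Hup] := cut_hyp Hab Huw Hc; exact: hyp_eq.
Qed.

Lemma sep_self u w : adj u w -> separates adj (hyperplane_of adj (u, w)) u w.
Proof. move=> H; rewrite sepE //; have [H1 H2] := Wh_ab H; tauto. Qed.

Lemma is_hyp_of u w : adj u w -> is_hyperplane adj (hyperplane_of adj (u, w)).
Proof. by move=> H; exists u, w. Qed.

Lemma sep_same J1 J2 x : is_hyperplane adj J1 -> is_hyperplane adj J2 ->
  (forall z, separates adj J1 z x <-> separates adj J2 z x) -> J1 = J2.
Proof.
move=> H1 H2 HE; case: (H1) => a [b [Hab E]].
have S1 : separates adj J1 a b by rewrite E; apply: sep_self.
have S2 : separates adj J2 a b.
  move: S1; rewrite (sep_xor a x b H1) (sep_xor a x b H2).
  rewrite (sep_symE x b H1) (sep_symE x b H2) !HE //.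
by rewrite E (sep_adj_eq H2 Hab S2).
Qed.

Fixpoint chain (u : V) (l : list V) : Prop :=
  if l is w :: l' then adj u w /\ chain w l' else True.
Fixpoint lst (u : V) (l : list V) : V := if l is w :: l' then lst w l' else u.
Fixpoint hyps (u : V) (l : list V) : list (V -> V -> Prop) :=
  if l is w :: l' then hyperplane_of adj (u, w) :: hyps w l' else nil.

Lemma walk_chain x y n : walk adj x y n -> exists l, [/\ chain x l, lst x l = y & length l = n].
Proof.
elim=> [a|a b c k Hab _ [l [H1 H2 H3]]]; first by exists nil.
by exists (b :: l); rewrite /= H2 H3.
Qed.

Lemma chain_walk x l : chain x l -> walk adj x (lst x l) (length l).
Proof. elim: l x => [|w l IH] x /=; [move=> _; exact: walk0 | case=> H1 H2; exact: walkS H1 (IH _ H2)]. Qed.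

Lemma chain_app x l1 l2 : chain x l1 -> chain (lst x l1) l2 -> chain x (l1 ++ l2).
Proof. elim: l1 x => [|w l IH] x //= [H1 H2] H3; split=> //; exact: IH. Qed.
Lemma lst_app x l1 l2 : lst x (l1 ++ l2) = lst (lst x l1) l2.
Proof. by elim: l1 x => [|w l IH] x //=. Qed.
Lemma hyps_app x l1 l2 : hyps x (l1 ++ l2) = (hyps x l1 ++ hyps (lst x l1) l2)%list.
Proof. by elim: l1 x => [|w l IH] x //=; rewrite IH. Qed.
Lemma length_app' (l1 l2 : list V) : length (l1 ++ l2) = length l1 + length l2.
Proof. by elim: l1 => [|w l IH] //=; rewrite IH. Qed.

Lemma geo_hyps u l : chain u l -> length l = d u (lst u l) ->
  [/\ List.NoDup (hyps u l), (forall J, List.In J (hyps u l) -> is_hyperplane adj J) &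
      forall J, is_hyperplane adj J -> (separates adj J u (lst u l) <-> List.In J (hyps u l))].
Proof.
elim: l u => [|w l IH] u /=.
  move=> _ _; split; [exact: List.NoDup_nil| by [] |].
  by move=> J HJ; split=> // /(nsep_refl u HJ).
move=> [Huw Hc] Hlen.
move: Hlen; move Ev: (lst w l) => v Hlen.
have Hwv : length l = d w v.
  have := d_min (chain_walk Hc); rewrite Ev; have := d_tri u w v; rewrite (d_adj Huw); lia.
have [N1 N2 N3] := IH w Hc (ltac:(by rewrite Ev)).
rewrite Ev in N3.
have J0h := is_hyp_of Huw.
have NJ0 : ~ separates adj (hyperplane_of adj (u, w)) w v.
  rewrite sepE // /Wh; move: (d_adj Huw) (d_adj (adj_sym Huw)) (d_0 w) (d_sym v u) (d_sym v w); lia.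
have NI : ~ List.In (hyperplane_of adj (u, w)) (hyps w l) by rewrite -N3.
split.
- exact: List.NoDup_cons.
- by move=> J [<-|/N2].
- move=> J HJ; split.
  + move=> Hs; case: (classic (separates adj J w v)) => Hw; first by right; apply/(N3 J HJ).
    left; symmetry; apply: (sep_adj_eq HJ Huw).
    move: Hs; rewrite (sep_xor u w v HJ); tauto.
  + case=> [<-|Hin].
    * rewrite sepE // /Wh; move: (d_adj Huw) (d_0 u) (d_sym v u) (d_sym v w); lia.
    * have Hw := proj2 (N3 J HJ) Hin.
      have Hnu : ~ separates adj J u w.
        by move=> Hs; apply: NI; rewrite -(sep_adj_eq HJ Huw Hs).
      rewrite (sep_xor u w v HJ); tauto.
Qed.

Lemma geo_ex u v : exists l, [/\ chain u l, lst u l = v & length l = d u v].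
Proof. exact: walk_chain (d_walk u v). Qed.

Lemma sep_list u v : exists L : list (V -> V -> Prop),
  [/\ List.NoDup L, length L = d u v, (forall J, List.In J L -> is_hyperplane adj J) &
      forall J, is_hyperplane adj J -> (separates adj J u v <-> List.In J L)].
Proof.
have [l [H1 H2 H3]] := geo_ex u v.
have [N1 N2 N3] := geo_hyps H1 (ltac:(by rewrite H2)).
exists (hyps u l); split=> //.
- have Lh : forall u' l', length (hyps u' l') = length l'.
    by move=> u' l'; elim: l' u' => [|w l' IH] u' //=; rewrite IH.
  by rewrite Lh H3.
- by move=> J HJ; rewrite -H2; apply: N3.
Qed.

Lemma nodup_disj (A : Type) (l1 l2 : list A) a :
  List.NoDup (l1 ++ l2) -> List.In a l1 -> List.In a l2 -> False.
Proof.
elim: l1 => [|b l IH] //= /List.NoDup_cons_iff [Hb Hn] [e|Hin] Hin2.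
- by subst; apply: Hb; apply: List.in_or_app; right.
- exact: IH Hn Hin Hin2.
Qed.

Lemma interval_sep u z v J : Ib u z v -> is_hyperplane adj J ->
  separates adj J u z -> separates adj J z v -> False.
Proof.
rewrite /Ib => HI HJ S1 S2.
have [l1 [C1 L1 N1]] := geo_ex u z.
have [l2 [C2 L2 N2]] := geo_ex z v.
have C : chain u (l1 ++ l2) by apply: chain_app C1 _; rewrite L1.
have L : lst u (l1 ++ l2) = v by rewrite lst_app L1.
have Len : length (l1 ++ l2) = d u (lst u (l1 ++ l2)) by rewrite length_app' L N1 N2.
have [G1 _ _] := geo_hyps C Len.
rewrite hyps_app L1 in G1.
have [_ _ G3] := geo_hyps C1 (ltac:(by rewrite L1)).
have [_ _ G4] := geo_hyps C2 (ltac:(by rewrite L2)).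
apply: (nodup_disj G1 (a := J)).
- by apply/(G3 J HJ); rewrite L1.
- by apply/(G4 J HJ); rewrite L2.
Qed.

Lemma interval_nsep u z v J : Ib u z v -> is_hyperplane adj J -> ~ separates adj J u v ->
  ~ separates adj J u z /\ ~ separates adj J z v.
Proof.
move=> HI HJ Hn; split=> H; apply: Hn; rewrite (sep_xor u z v HJ).
- by have := interval_sep HI HJ H; tauto.
- by have := fun H' => interval_sep HI HJ H' H; tauto.
Qed.

Lemma Ib_sym x m y : Ib x m y -> Ib y m x.
Proof. rewrite /Ib => H; rewrite [d y m]d_sym [d m x]d_sym [d y x]d_sym; lia. Qed.

Definition himg (phi : V -> V) (J : V -> V -> Prop) : V -> V -> Prop :=
  fun x y => exists a b, J a b /\ x = phi a /\ y = phi b.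

Section Auto.
Variables (phi psi : V -> V).
Hypothesis Hpp : cancel phi psi.
Hypothesis Hpp' : cancel psi phi.
Hypothesis Hadj : forall x y, adj x y <-> adj (phi x) (phi y).

Lemma walk_phi x y n : walk adj x y n -> walk adj (phi x) (phi y) n.
Proof. elim=> [a|a b c k Hab _ IH]; [exact: walk0 | exact: (walkS (proj1 (Hadj _ _) Hab) IH)]. Qed.

Lemma psi_adj x y : adj (psi x) (psi y) -> adj x y.
Proof. by move=> H; have := proj1 (Hadj _ _) H; rewrite !Hpp'. Qed.

Lemma psi_adj' x y : adj x y -> adj (psi x) (psi y).
Proof. by move=> H; apply: (proj2 (Hadj (psi x) (psi y))); rewrite !Hpp'. Qed.

Lemma walk_psi x y n : walk adj x y n -> walk adj (psi x) (psi y) n.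
Proof.
elim=> [a|a b c k Hab _ IH]; [exact: walk0 | apply: (walkS _ IH)].
exact: psi_adj'.
Qed.

Lemma d_phi x y : d (phi x) (phi y) = d x y.
Proof.
have H1 := d_min (walk_phi (d_walk x y)).
have H2 := d_min (walk_psi (d_walk (phi x) (phi y))); rewrite !Hpp in H2; lia.
Qed.

Lemma Wh_phi a b z : Wh (phi a) (phi b) (phi z) <-> Wh a b z.
Proof. by rewrite /Wh !d_phi. Qed.

Lemma Ib_phi x m y : Ib (phi x) (phi m) (phi y) <-> Ib x m y.
Proof. by rewrite /Ib !d_phi. Qed.

Lemma ostep_phi e f : ostep adj e f -> ostep adj (phi e.1, phi e.2) (phi f.1, phi f.2).
Proof.
case: e f => p q [r s]; rewrite /ostep /sq /= => [[H1 H2 H3 H4 [H5 H6]]].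
have Hi := can_inj Hpp.
split; try exact: (proj1 (Hadj _ _)); split=> /Hi //.
Qed.

Lemma upar_phi e f : upar adj e f -> upar adj (phi e.1, phi e.2) (phi f.1, phi f.2).
Proof.
elim=> {e f} [e f [H|->]|e|e f _ IH|e f g _ IH1 _ IH2].
- by apply: rst_step; left; apply: ostep_phi.
- by apply: rst_step; right.
- exact: rst_refl.
- exact: rstS.
- exact: rstT IH2.
Qed.

Lemma opar_phi e f : opar adj e f -> opar adj (phi e.1, phi e.2) (phi f.1, phi f.2).
Proof.
elim=> {e f} [e f H|e|e f _ IH|e f g _ IH1 _ IH2].
- by apply: rst_step; apply: ostep_phi.
- exact: rst_refl.
- exact: rstS.
- exact: rstT IH2.
Qed.

End Auto.

Lemma himg_hyp (phi psi : V -> V) a b : cancel phi psi -> cancel psi phi ->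
  (forall x y, adj x y <-> adj (phi x) (phi y)) ->
  himg phi (hyperplane_of adj (a, b)) = hyperplane_of adj (phi a, phi b).
Proof.
move=> H1 H2 H3.
have H3' : forall x y, adj x y <-> adj (psi x) (psi y).
  move=> x y; split=> H.
    by apply: (proj2 (H3 (psi x) (psi y))); rewrite !H2.
  by have := proj1 (H3 _ _) H; rewrite !H2.
apply: functional_extensionality => x; apply: functional_extensionality => y.
apply: propositional_extensionality; split.
- case=> a' [b' [[Hab' Hup] [-> ->]]]; split; first exact: (proj1 (H3 _ _) Hab').
  exact: (upar_phi H1 H3 Hup).
- case=> Hxy Hup; exists (psi x), (psi y); rewrite !H2; split=> //; split.
    exact: (proj1 (H3' _ _) Hxy).
  have := upar_phi H2 H3' Hup; rewrite /= !H1; exact.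
Qed.

Lemma himg_is_hyp (phi psi : V -> V) J : cancel phi psi -> cancel psi phi ->
  (forall x y, adj x y <-> adj (phi x) (phi y)) ->
  is_hyperplane adj J -> is_hyperplane adj (himg phi J).
Proof.
move=> H1 H2 H3 [a [b [Hab ->]]]; exists (phi a), (phi b); split; first exact: (proj1 (H3 _ _) Hab).
exact: himg_hyp.
Qed.

Lemma sep_himg (phi psi : V -> V) J u v : cancel phi psi -> cancel psi phi ->
  (forall x y, adj x y <-> adj (phi x) (phi y)) -> is_hyperplane adj J ->
  (separates adj (himg phi J) (phi u) (phi v) <-> separates adj J u v).
Proof.
move=> H1 H2 H3 [a [b [Hab ->]]]; have Hab' := proj1 (H3 _ _) Hab.
rewrite (himg_hyp a b H1 H2 H3) (sepE _ _ Hab') (sepE _ _ Hab).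
by rewrite !(Wh_phi H1 H2 H3).
Qed.

Lemma himg_inj (phi : V -> V) J1 J2 : injective phi -> himg phi J1 = himg phi J2 -> J1 = J2.
Proof.
move=> Hi E; apply: functional_extensionality => a; apply: functional_extensionality => b.
apply: propositional_extensionality; split=> H.
- have : himg phi J1 (phi a) (phi b) by exists a, b.
  by rewrite E => [[a' [b' [H' [/Hi e1 /Hi e2]]]]]; subst.
- have : himg phi J2 (phi a) (phi b) by exists a, b.
  by rewrite -E => [[a' [b' [H' [/Hi e1 /Hi e2]]]]]; subst.
Qed.

Lemma himg_comp (phi psi : V -> V) J : himg phi (himg psi J) = himg (phi \o psi) J.
Proof.
apply: functional_extensionality => x; apply: functional_extensionality => y.
apply: propositional_extensionality; split.
- by case=> a [b [[a' [b' [H [-> ->]]]] [-> ->]]]; exists a', b'.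
- by case=> a [b [H [-> ->]]]; exists (psi a), (psi b); split=> //; exists a, b.
Qed.

Lemma himg_id (phi : V -> V) J : (forall x, phi x = x) -> himg phi J = J.
Proof.
move=> H; apply: functional_extensionality => x; apply: functional_extensionality => y.
apply: propositional_extensionality; split.
- by case=> a [b [Hj [-> ->]]]; rewrite !H.
- by move=> Hj; exists x, y; rewrite !H.
Qed.

Lemma sep_sides J : is_hyperplane adj J ->
  exists S : V -> Prop, forall u v, separates adj J u v <-> ~ (S u <-> S v).
Proof. by case=> a [b [Hab ->]]; exists (Wh a b) => u v; apply: sepE. Qed.

Ltac add_em P := lazymatch goal with | _ : P \/ ~ P |- _ => fail | _ => pose proof (classic P) end.

Ltac sides HJ :=
  let S := fresh "S" in let HS := fresh "HS" in
  have [S HS] := sep_sides HJ;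
  lazymatch type of HJ with is_hyperplane _ ?J =>
    repeat match goal with
    | H : context [separates _ J ?u ?v] |- _ => rewrite (HS u v) in H
    | |- context [separates _ J ?u ?v] => rewrite (HS u v)
    end end;
  repeat match goal with
  | H : ?T |- _ => lazymatch T with context [S] => fail | _ => clear H end
  end;
  repeat match goal with
  | H : context [S ?z] |- _ => add_em (S z)
  | |- context [S ?z] => add_em (S z)
  end;
  tauto.

Lemma opar_rev e f : opar adj e f -> opar adj (e.2, e.1) (f.2, f.1).
Proof.
elim=> {e f} [[p q] [r s] H|e|e f _ IH|e f g _ IH1 _ IH2].
- by apply: rst_step; apply: sq_swap.
- exact: rst_refl.
- exact: rstS.
- exact: rstT IH2.
Qed.

Lemma rst_flip (A : Type) (R : A -> A -> Prop) (P : A -> Prop) (e0 : A) :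
  forall x y, clos_refl_sym_trans A R x y -> clos_refl_sym_trans A R e0 x ->
  (P x /\ ~ P y \/ ~ P x /\ P y) ->
  exists x' y', [/\ clos_refl_sym_trans A R e0 x', R x' y' \/ R y' x', P x' & ~ P y'].
Proof.
move=> x y; elim=> {x y} [x y H|x|x y Hyx IH|x y z Hxy IH1 Hyz IH2] Q HP.
- case: HP => [[H1 H2]|[H1 H2]].
  + by exists x, y; split=> //; left.
  + exists y, x; split=> //; last by right.
    exact: rstT Q (rst_step _ _ _ _ H).
- by case: HP; tauto.
- apply: IH; first exact: rstT Q (rstS Hyx).
  tauto.
- have Qy := rstT Q Hxy.
  case: (classic (P y)) => Py.
  + case: HP => [[H1 H2]|[H1 H2]].
    * by apply: IH2 => //; left.
    * by apply: IH1 => //; right.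
  + case: HP => [[H1 H2]|[H1 H2]].
    * by apply: IH1 => //; left.
    * by apply: IH2 => //; right.
Qed.

Lemma cross_edge A B : is_hyperplane adj A -> is_hyperplane adj B ->
  forall n u v, d u v = n -> ~ separates adj B u v -> separates adj A u v ->
  exists s1 s2, [/\ adj s1 s2, separates adj A s1 s2, ~ separates adj B u s1 &
                   ~ separates adj B u s2].
Proof.
move=> HA HB; elim=> [|n IH] u v Hn HBn HAs.
  by move/d_eq0: Hn => e; subst; case: (nsep_refl v HA).
have := d_walk u v; rewrite Hn => /walkS_inv [u' [Huu' Hw]].
have Hu'v : d u' v = n by have := d_min Hw; have := d_tri u u' v; rewrite (d_adj Huu'); lia.
have HI : Ib u u' v by rewrite /Ib (d_adj Huu'); lia.
have [N1 N2] := interval_nsep HI HB HBn.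
case: (classic (separates adj A u u')) => Hs.
  by exists u, u'; split=> //; apply: nsep_refl.
have HA' : separates adj A u' v by move: HAs; rewrite (sep_xor u u' v HA); tauto.
have [s1 [s2 [H1 H2 H3 H4]]] := IH u' v Hu'v N2 HA'.
exists s1, s2; split=> //.
- by rewrite (sep_xor u u' s1 HB); tauto.
- by rewrite (sep_xor u u' s2 HB); tauto.
Qed.

Lemma transverse A B u v w t : is_hyperplane adj A -> is_hyperplane adj B ->
  separates adj A u v -> ~ separates adj B u v ->
  ~ separates adj A u w -> separates adj B u w ->
  separates adj A u t -> separates adj B u t ->
  exists p q r, [/\ spans adj p q r, A = hyperplane_of adj (p, q) & B = hyperplane_of adj (p, r)].
Proof.
move=> HA HB H1 H2 H3 H4 H5 H6.
have [s1 [s2 [Hs Hs12 Hs1 Hs2]]] := cross_edge HA HB (erefl _) H2 H1.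
have Hwt_B : ~ separates adj B w t by clear -HX HB H4 H6; sides HB.
have Hwt_A : separates adj A w t by clear -HX HA H3 H5; sides HA.
have [t1 [t2 [Ht Ht12 Ht1 Ht2]]] := cross_edge HA HB (erefl _) Hwt_B Hwt_A.
have Bt1 : separates adj B u t1 by clear -HX HB H4 Ht1; sides HB.
have Bt2 : separates adj B u t2 by clear -HX HB H4 Ht2; sides HB.
have EA := sep_adj_eq HA Hs Hs12.
have EA' := sep_adj_eq HA Ht Ht12.
have Hin : hyperplane_of adj (s1, s2) t1 t2 by rewrite -EA EA'; split=> //; exact: rst_refl.
have [f [Of Bf]] : exists f, opar adj (s1, s2) f /\ separates adj B u f.1.
  case: (hyp_cut Hs Hin) => [[W1 W2]|[W1 W2]] /=.
  + by exists (t1, t2); split=> //; apply: cut_opar.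
  + by exists (t2, t1); split=> //; apply: cut_opar => //; apply: adj_sym.
have [[p q] [[r s] [Oe Hst Pe Pf]]] :=
  @rst_flip _ (ostep adj) (fun e => ~ separates adj B u e.1) (s1, s2) (s1, s2) f Of (rst_refl _ _ _)
    (ltac:(by left; split)).
simpl in Pe, Pf.
have Bpr : separates adj B p r by clear -HX HB Pe Pf; sides HB.
have EA2 : A = hyperplane_of adj (p, q) by rewrite EA; apply: hyp_eq; apply: opar_upar.
case: Hst => [[Hpq Hrs Hpr Hqs [Hps Hqr]]|[Hrs Hpq Hrp Hsq [Hrq Hsp]]].
- exists p, q, r; split=> //; last exact: sep_adj_eq HB Hpr Bpr.
  split=> //; exists s; split=> //; split=> // e; apply: Hps; by rewrite e.
- have Hpr := adj_sym Hrp.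
  exists p, q, r; split=> //; last exact: sep_adj_eq HB Hpr Bpr.
  split=> //; first by move=> e; subst.
  exists s; split; first exact: adj_sym.
  split=> //.
Qed.

Lemma nodup_map_seq (A : Type) (f : nat -> A) n :
  (forall i j, i < j -> j < n -> f i <> f j) -> List.NoDup (List.map f (List.seq 0 n)).
Proof.
suff H : forall a, (forall i j, a <= i -> i < j -> j < a + n -> f i <> f j) ->
                   List.NoDup (List.map f (List.seq a n)).
  by move=> Hf; apply: H => i j _ Hij Hj; apply: Hf.
elim: n => [|n IH] a Hf /=; first exact: List.NoDup_nil.
apply: List.NoDup_cons.
  move/List.in_map_iff => [k [Ek /List.in_seq Hk]].
  by apply: (Hf a k) => //; lia.
by apply: IH => i j Hi Hij Hj; apply: Hf => //; lia.
Qed.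

Lemma list_min (A : Type) (R : A -> A -> Prop) (l : list A) a0 : List.In a0 l ->
  (forall a b, List.In a l -> List.In b l -> R a b \/ R b a) ->
  (forall a b c, R a b -> R b c -> R a c) -> (forall a, R a a) ->
  exists m, List.In m l /\ forall b, List.In b l -> R m b.
Proof.
move=> H0 Htot Htr Hrf; elim: l a0 H0 Htot => [|a l IH] a0 //= H0 Htot.
case: l IH H0 Htot => [|b l] IH H0 Htot.
  by exists a; split; [left|move=> c [<-|[]]].
have [m [Hm Hmin]] := IH b (or_introl erefl) (fun x y Hx Hy => Htot x y (or_intror Hx) (or_intror Hy)).
have [Ham|Hma] := Htot a m (or_introl erefl) (or_intror Hm).
- exists a; split; first by left.
  by move=> c [<-|Hc]; [apply: Hrf | apply: Htr Ham (Hmin c Hc)].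
- exists m; split; first by right.
  by move=> c [<-|Hc]; [|apply: Hmin].
Qed.

Section Group.
Variable g : V -> V.
Hypothesis Hg : automorphism adj g.
Hypothesis Hcosp : cospecial adj g.

Lemma g_adj x y : adj x y <-> adj (g x) (g y). Proof. by case: Hg => _; apply. Qed.
Lemma ginv_ex : exists h, cancel g h /\ cancel h g.
Proof. by case: Hg => [[h H1 H2] _]; exists h. Qed.
Definition gi := proj1_sig (constructive_indefinite_description _ ginv_ex).
Lemma g_gi : cancel g gi. Proof. by rewrite /gi; case: constructive_indefinite_description => h []. Qed.
Lemma gi_g : cancel gi g. Proof. by rewrite /gi; case: constructive_indefinite_description => h []. Qed.

Lemma Gc n : cancel (iter n g) (iter n gi).
Proof. elim: n => [|n IH] x //; by rewrite [iter n.+1 gi _]iterSr iterS g_gi IH. Qed.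
Lemma Gc' n : cancel (iter n gi) (iter n g).
Proof. elim: n => [|n IH] x //; by rewrite [iter n.+1 g _]iterSr iterS gi_g IH. Qed.
Lemma G_adj n x y : adj x y <-> adj (iter n g x) (iter n g y).
Proof. elim: n => [|n IH] //=; rewrite IH; exact: g_adj. Qed.
Lemma Gi_adj n x y : adj x y <-> adj (iter n gi x) (iter n gi y).
Proof. by rewrite (G_adj n (iter n gi x)) !Gc'. Qed.

Lemma dG n x y : d (iter n g x) (iter n g y) = d x y.
Proof. exact: (d_phi (Gc n) (Gc' n) (G_adj n)). Qed.
Lemma dg x y : d (g x) (g y) = d x y. Proof. exact: (dG 1). Qed.
Lemma Ibg x m y : Ib x m y -> Ib (g x) (g m) (g y). Proof. by rewrite /Ib !dg. Qed.

Lemma hi_sep n J u v : is_hyperplane adj J ->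
  (separates adj (hyp_image g n J) (iter n g u) (iter n g v) <-> separates adj J u v).
Proof. exact: (sep_himg _ _ (Gc n) (Gc' n) (G_adj n)). Qed.
Lemma hi_sep1 J u v : is_hyperplane adj J ->
  (separates adj (hyp_image g 1 J) (g u) (g v) <-> separates adj J u v).
Proof. exact: (hi_sep 1). Qed.
Lemma hi_hyp n J : is_hyperplane adj J -> is_hyperplane adj (hyp_image g n J).
Proof. exact: (himg_is_hyp (Gc n) (Gc' n) (G_adj n)). Qed.
Lemma hi_add m n J : hyp_image g (m + n) J = hyp_image g m (hyp_image g n J).
Proof.
change (himg (iter (m + n) g) J = himg (iter m g) (himg (iter n g) J)).
rewrite himg_comp; congr himg; apply: functional_extensionality => x; exact: iterD.
Qed.
Lemma hi_0 J : hyp_image g 0 J = J.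
Proof. exact: (@himg_id (iter 0 g) J (fun x => erefl)). Qed.
Lemma hi_inj n J1 J2 : hyp_image g n J1 = hyp_image g n J2 -> J1 = J2.
Proof. exact: (himg_inj (can_inj (Gc n))). Qed.
Lemma hi_of n a b :
  hyp_image g n (hyperplane_of adj (a, b)) = hyperplane_of adj (iter n g a, iter n g b).
Proof. exact: (himg_hyp a b (Gc n) (Gc' n) (G_adj n)). Qed.

Lemma inv_no J x : is_hyperplane adj J -> separates adj J x (g x) -> hyp_image g 1 J = J -> False.
Proof.
case=> a [b [Hab EJ]]; subst J => Hs Hfix.
have Hgab : adj (g a) (g b) := proj1 (g_adj a b) Hab.
have E : hyperplane_of adj (g a, g b) = hyperplane_of adj (a, b).
  by rewrite -Hfix (hi_of 1 a b).
have Hin : hyperplane_of adj (a, b) (g a) (g b) by rewrite -E; split=> //; exact: rst_refl.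
case: (hyp_cut Hab Hin) => /= [[W1 W2]|[W1 W2]].
- have HW : forall z, Wh a b z <-> Wh (g a) (g b) z.
    move=> z; have S1 := sepE z (g a) Hab; have S2 := sepE z (g a) Hgab.
    rewrite E in S2; have [Wa _] := Wh_ab Hgab.
    have := classic (Wh a b z); have := classic (Wh (g a) (g b) z).
    clear -S1 S2 W1 Wa; tauto.
  move: Hs; rewrite (sepE _ _ Hab) => Hs; apply: Hs.
  by rewrite (HW (g x)) (Wh_phi g_gi gi_g g_adj).
- have O := cut_opar Hab (adj_sym Hgab) W2 W1.
  have O' := rstS (opar_rev O).
  case: Hcosp => C1 _ _ _; exact: (C1 a b 1 Hab O').
Qed.

Lemma no_cross A B n u v w t : is_hyperplane adj A -> is_hyperplane adj B ->
  (B = hyp_image g n A \/ A = hyp_image g n B) ->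
  separates adj A u v -> ~ separates adj B u v ->
  ~ separates adj A u w -> separates adj B u w ->
  separates adj A u t -> separates adj B u t -> False.
Proof.
move=> HA HB Hor H1 H2 H3 H4 H5 H6.
have [p [q [r [Hsp EA EB]]]] := transverse HA HB H1 H2 H3 H4 H5 H6.
case: Hcosp => _ C2 _ _; apply: (C2 p q r Hsp).
case: Hsp => Hpq Hpr _ _.
case: Hor => E; exists n.
- left; rewrite EA EB (hi_of n p q) in E.
  have : hyperplane_of adj (p, r) p r by split=> //; exact: rst_refl.
  by rewrite E => [[_ Hu]].
- right; rewrite EA EB (hi_of n p r) in E.
  have : hyperplane_of adj (p, q) p q by split=> //; exact: rst_refl.
  by rewrite E => [[_ Hu]].
Qed.

Definition HMin z := forall w, d z (g z) <= d w (g w).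
Lemma HMin_g z : HMin z -> HMin (g z). Proof. by rewrite /HMin dg. Qed.
Lemma HMin_G n z : HMin z -> HMin (iter n g z).
Proof. by move=> H; elim: n => [|n IH] //=; apply: HMin_g. Qed.

Lemma M1 x J : HMin x -> is_hyperplane adj J ->
  separates adj J (g x) (g (g x)) -> separates adj J x (g (g (g x))).
Proof.
move=> Hm HJ HJs.
have [c [C1 C2 C3]] := med_ex x (g x) (g (g x)).
have [Lc [NLc LenLc HLc ILc]] := sep_list c (g c).
have [L1 [NL1 LenL1 HL1 IL1]] := sep_list (g x) (g (g x)).
have Ka : forall K, is_hyperplane adj K -> separates adj K c (g c) ->
                    separates adj K (g x) (g (g x)).
  move=> K HK Hs; apply: NNPP => Hn.
  have [N1 _] := interval_nsep C2 HK Hn.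
  have [N2 _] := interval_nsep (Ibg C1) HK Hn.
  by clear -HX HK Hs N1 N2; sides HK.
have Kb : forall K, is_hyperplane adj K -> separates adj K c (g c) ->
                    separates adj K x (g (g (g x))).
  move=> K HK Hs; have Ha := Ka K HK Hs; apply: NNPP => Hn.
  case: (classic (separates adj K x (g x))) => Hx.
  - have Nx2 : ~ separates adj K x (g (g x)) by clear -HX HK Hx Ha; sides HK.
    have [N1 _] := interval_nsep C3 HK Nx2.
    have N23 : ~ separates adj K (g (g x)) (g (g (g x))) by clear -HX HK Nx2 Hn; sides HK.
    have [N2 _] := interval_nsep (Ibg C2) HK N23.
    by clear -HX HK Hs N1 N2 Nx2; sides HK.
  - have [N1 _] := interval_nsep C1 HK Hx.
    have N13 : ~ separates adj K (g x) (g (g (g x))) by clear -HX HK Hx Hn; sides HK.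
    have [N2 _] := interval_nsep (Ibg C3) HK N13.
    by clear -HX HK Hs N1 N2 Hx; sides HK.
have Inc : List.incl Lc L1.
  move=> K Hin; have HK := HLc K Hin; apply/(IL1 K HK); apply: (Ka K HK); exact/(ILc K HK).
have Len : (length L1 <= length Lc)%coq_nat.
  rewrite LenL1 LenLc dg; apply/leP; exact: Hm.
have Inc' := List.NoDup_length_incl NLc Len Inc.
have Hin : List.In J Lc by apply: Inc'; apply/(IL1 J HJ).
exact: Kb J HJ (proj2 (ILc J HJ) Hin).
Qed.

Definition S01 x K := [/\ is_hyperplane adj K, separates adj K x (g x) &
                          separates adj K (g x) (g (g x))].

Lemma S01_step x K : HMin x -> S01 x K -> S01 x (hyp_image g 1 K).
Proof.
move=> Hm [HK S1 S2]; have HK' := hi_hyp 1 HK.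
have T1 := proj2 (hi_sep1 x (g x) HK) S1.
have T2 := proj2 (hi_sep1 (g x) (g (g x)) HK) S2.
have T3 := M1 Hm HK' T1.
split=> //; clear -HX HK' T1 T2 T3; sides HK'.
Qed.

Lemma not_le_ex (P Q : V -> Prop) : ~ (forall z, ~ P z -> ~ Q z) -> exists z, ~ P z /\ Q z.
Proof.
move=> H; apply: NNPP => Hn; apply: H => z Hp Hq; apply: Hn; exists z; split=> //.
Qed.

Lemma M2 x H : HMin x -> is_hyperplane adj H -> separates adj H x (g x) ->
  separates adj H (g x) (g (g x)) -> False.
Proof.
move=> Hm HH S1 S2.
have Orb : forall j, S01 x (hyp_image g j H).
  elim=> [|j IH]; first by rewrite hi_0.
  by rewrite (hi_add 1 j); apply: S01_step.
have [L [NL LenL HL IL]] := sep_list x (g x).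
have NotND : ~ List.NoDup (List.map (fun j => hyp_image g j H) (List.seq 0 (d x (g x)).+1)).
  move=> ND.
  have Inc : List.incl (List.map (fun j => hyp_image g j H) (List.seq 0 (d x (g x)).+1)) L.
    move=> K /List.in_map_iff [j [<- _]]; have [HK T1 _] := Orb j; exact/(IL _ HK).
  have := List.NoDup_incl_length ND Inc; rewrite List.length_map List.length_seq LenL; lia.
have [i [j [Hij Eij]]] : exists i j, i < j /\ hyp_image g i H = hyp_image g j H.
  apply: NNPP => Hno; apply: NotND; apply: nodup_map_seq => i j Hij _ E.
  by apply: Hno; exists i, j.
set Y := hyp_image g i H.
set p := j - i.
have Hp : 0 < p by rewrite /p; lia.
have EY : hyp_image g p Y = Y by rewrite /Y -hi_add /p subnK ?Eij //; lia.
have OrbY : forall m, S01 x (hyp_image g m Y) by move=> m; rewrite /Y -hi_add.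
set O := List.map (fun m => hyp_image g m Y) (List.seq 0 p).
have InO : forall K, List.In K O <-> exists m, m < p /\ K = hyp_image g m Y.
  move=> K; rewrite List.in_map_iff; split.
  - by case=> m [<- /List.in_seq Hk]; exists m; split=> //; apply/ltP; lia.
  - by case=> m [Hk ->]; exists m; split=> //; apply/List.in_seq; move/ltP: Hk; lia.
have O1 : forall K, List.In K O -> S01 x K by move=> K /InO [m [_ ->]].
have O2 : forall K, List.In K O -> List.In (hyp_image g 1 K) O.
  move=> K /InO [m [Hk ->]]; apply/InO; rewrite -hi_add.
  case: (ltnP m.+1 p) => Hm1; first by exists m.+1.
  by exists 0; split=> //; rewrite hi_0 (_ : 1 + m = p) //; lia.
have O3 : forall K, List.In K O -> exists K', List.In K' O /\ hyp_image g 1 K' = K.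
  move=> K /InO [[|m] [Hk ->]].
  - exists (hyp_image g p.-1 Y); split; first by apply/InO; exists p.-1; split=> //; lia.
    by rewrite -hi_add (_ : 1 + p.-1 = p) ?hi_0 //; lia.
  - exists (hyp_image g m Y); split; first by apply/InO; exists m; split=> //; lia.
    by rewrite -hi_add.
have O4 : forall K1 K2, List.In K1 O -> List.In K2 O ->
            exists n, K2 = hyp_image g n K1 \/ K1 = hyp_image g n K2.
  move=> K1 K2 /InO [m1 [_ ->]] /InO [m2 [_ ->]].
  case: (leqP m1 m2) => H12.
  - by exists (m2 - m1); left; rewrite -hi_add subnK.
  - by exists (m1 - m2); right; rewrite -hi_add subnK // ltnW.
pose le K1 K2 := forall z, ~ separates adj K1 z x -> ~ separates adj K2 z x.
have O5 : forall K1 K2, List.In K1 O -> List.In K2 O -> le K1 K2 \/ le K2 K1.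
  move=> K1 K2 I1 I2; apply: NNPP => Hn.
  have [z1 [A1 A2]] := not_le_ex (fun H' => Hn (or_introl H')).
  have [z2 [B1 B2]] := not_le_ex (fun H' => Hn (or_intror H')).
  have [HK1 S11 _] := O1 K1 I1; have [HK2 S21 _] := O1 K2 I2.
  have [n En] := O4 K1 K2 I1 I2.
  apply: (no_cross (u := x) (v := z2) (w := z1) (t := g x) HK1 HK2 En).
  - by rewrite sep_symE.
  - by rewrite sep_symE.
  - by rewrite sep_symE.
  - by rewrite sep_symE.
  - done.
  - done.
have O7 : forall K1 K2, List.In K1 O -> List.In K2 O -> le K1 K2 ->
            le (hyp_image g 1 K2) (hyp_image g 1 K1).
  move=> K1 K2 I1 I2 Hle z Hz.
  have [HK1 _ _] := O1 K1 I1; have [HK2 _ _] := O1 K2 I2.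
  have [HgK1 Sg1 _] := O1 _ (O2 K1 I1); have [HgK2 Sg2 _] := O1 _ (O2 K2 I2).
  have Ez : z = g (gi z) by rewrite gi_g.
  have A1 : separates adj (hyp_image g 1 K2) z (g x) by clear -HX HgK2 Sg2 Hz; sides HgK2.
  rewrite Ez hi_sep1 // in A1.
  have A2 : separates adj K1 (gi z) x by apply: NNPP => /Hle.
  have A3 := proj2 (hi_sep1 (gi z) x HK1) A2; rewrite -Ez in A3.
  by clear -HX HgK1 Sg1 A3; sides HgK1.
have Y0in : List.In Y O by apply/InO; exists 0; split=> //; rewrite hi_0.
have [Y0 [IY0 Y0min]] := list_min Y0in O5 (fun a b c H1 H2 z Hz => H2 z (H1 z Hz)) (fun a z Hz => Hz).
set Y1 := hyp_image g 1 Y0.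
set Y2 := hyp_image g 1 Y1.
have IY1 : List.In Y1 O := O2 Y0 IY0.
have IY2 : List.In Y2 O := O2 Y1 IY1.
have Y1max : forall K, List.In K O -> le K Y1.
  move=> K IK; have [K' [IK' <-]] := O3 K IK; exact: O7 Y0 K' IY0 IK' (Y0min K' IK').
have Y2min : forall K, List.In K O -> le Y2 K.
  move=> K IK; have [K' [IK' <-]] := O3 K IK; exact: O7 K' Y1 IK' IY1 (Y1max K' IK').
have [HY0 SY0 _] := O1 Y0 IY0; have [HY1 SY1 _] := O1 Y1 IY1; have [HY2 SY2 _] := O1 Y2 IY2.
have EY02 : Y0 = Y2.
  apply: (sep_same (x := x) HY0 HY2) => z; split=> Hs; apply: NNPP => Hn.
  - exact: (Y2min Y0 IY0 z Hn Hs).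
  - exact: (Y0min Y2 IY2 z Hn Hs).
case: (classic (Y1 = Y0)) => E10; first exact: inv_no HY0 SY0 E10.
have [z0 [Rz01 Rz02]] : exists z, ~ separates adj Y1 z x /\ separates adj Y0 z x.
  apply: not_le_ex => Hle; apply: E10; apply: (sep_same (x := x) HY1 HY0) => z.
  split=> Hs; apply: NNPP => Hn; [exact: (Y0min Y1 IY1 z Hn Hs) | exact: (Hle z Hn Hs)].
pose R z := ~ separates adj Y1 z x /\ separates adj Y0 z x.
have R1 : forall z, R z <-> R (g z).
  move=> z; rewrite /R.
  have F1 := hi_sep1 z x HY0; have F2 := hi_sep1 z x HY1.
  rewrite -/Y1 in F1; rewrite -/Y2 -EY02 in F2.
  have G1 : separates adj Y1 (g z) x <-> ~ separates adj Y1 (g z) (g x).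
    by clear -HX HY1 SY1; sides HY1.
  have G0 : separates adj Y0 (g z) x <-> ~ separates adj Y0 (g z) (g x).
    by clear -HX HY0 SY0; sides HY0.
  have := classic (separates adj Y1 (g z) (g x)); have := classic (separates adj Y0 (g z) (g x)).
  clear -F1 F2 G1 G0; tauto.
have R2 : forall z1 z2 w, R z1 -> R z2 -> Ib z1 w z2 -> R w.
  move=> z1 z2 w [A1 A2] [B1 B2] HI; split.
  - have N12 : ~ separates adj Y1 z1 z2 by clear -HX HY1 A1 B1; sides HY1.
    have [N _] := interval_nsep HI HY1 N12.
    by clear -HX HY1 A1 N; sides HY1.
  - have N12 : ~ separates adj Y0 z1 z2 by clear -HX HY0 A2 B2; sides HY0.
    have [N _] := interval_nsep HI HY0 N12.
    by clear -HX HY0 A2 N; sides HY0.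
have [n0 [[p0 [Rp Ep]] Hmin]] :=
  ex_min (P := fun n => exists r, R r /\ d x r = n) (ex_intro _ (d x z0) (ex_intro _ z0 (conj (conj Rz01 Rz02) erefl))).
have Gate : forall r, R r -> Ib x p0 r.
  move=> r Rr; have [m [M1' M2' M3']] := med_ex x p0 r.
  have Rm := R2 _ _ _ Rp Rr M2'.
  have Hle := Hmin (d x m) (ex_intro _ m (conj Rm erefl)).
  move: M1'; rewrite /Ib => M1'.
  have e : d m p0 = 0 by lia.
  by move/d_eq0: e => e; subst m.
have Gate2 : forall r, R r -> Ib (g x) (g p0) r.
  move=> r Rr; have Rr' : R (gi r) by apply/R1; rewrite gi_g.
  by have := Ibg (Gate _ Rr'); rewrite gi_g.
have Rgp := proj1 (R1 p0) Rp.
have Sub : forall K, is_hyperplane adj K -> separates adj K p0 (g p0) ->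
             separates adj K x (g x) /\ K <> Y0.
  move=> K HK Hs.
  have N1 : ~ separates adj K x p0 by move=> H'; exact: interval_sep (Gate _ Rgp) HK H' Hs.
  have N2 : ~ separates adj K (g x) (g p0).
    by move=> H'; apply: (interval_sep (Gate2 _ Rp) HK H'); rewrite sep_symE.
  split; first by clear -HX HK Hs N1 N2; sides HK.
  move=> E; subst K; case: Rp => _ Rp2; case: Rgp => _ Rg2.
  by clear -HX HK Hs Rp2 Rg2; sides HK.
have [Lp [NLp LenLp HLp ILp]] := sep_list p0 (g p0).
have NI : ~ List.In Y0 Lp.
  by move=> Hin; have [_ []] := Sub Y0 HY0 (proj2 (ILp Y0 HY0) Hin).
have ND : List.NoDup (Y0 :: Lp) by apply: List.NoDup_cons.
have Inc : List.incl (Y0 :: Lp) L.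
  move=> K [<-|Hin]; first exact/(IL Y0 HY0).
  have HK := HLp K Hin; apply/(IL K HK); exact: (proj1 (Sub K HK (proj2 (ILp K HK) Hin))).
have := List.NoDup_incl_length ND Inc; rewrite /= LenLp LenL.
have := Hm p0; lia.
Qed.

Lemma M3 x H : HMin x -> is_hyperplane adj H -> separates adj H x (g x) ->
  forall z, ~ separates adj (hyp_image g 1 H) z (g (g x)) -> ~ separates adj H z (g x).
Proof.
move=> Hm HH Hs z Hz Hzs.
have HgH := hi_hyp 1 HH.
have T1 := proj2 (hi_sep1 x (g x) HH) Hs.
case: (classic (separates adj H (g x) (g (g x)))) => C1; first exact: M2 Hm HH Hs C1.
case: (classic (separates adj (hyp_image g 1 H) x (g x))) => C2; first exact: M2 Hm HgH C2 T1.
apply: (no_cross (n := 1) (u := g x) (v := x) (w := g (g x)) (t := z) HH HgH (or_introl erefl)).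
- by rewrite sep_symE.
- by rewrite sep_symE.
- done.
- done.
- by rewrite sep_symE.
- by clear -HX HgH Hz T1; sides HgH.
Qed.

Lemma M3' x H : HMin x -> is_hyperplane adj H -> separates adj H x (g x) ->
  forall k, ~ separates adj H (iter k.+1 g x) (g x).
Proof.
move=> Hm HH Hs; elim=> [|k IH]; first exact: nsep_refl.
apply: (M3 Hm HH Hs) => /(proj1 (hi_sep1 _ _ HH)); exact: IH.
Qed.

Lemma Ddisj x J i j : HMin x -> is_hyperplane adj J -> i < j ->
  separates adj J (iter i g x) (iter i.+1 g x) ->
  separates adj J (iter j g x) (iter j.+1 g x) -> False.
Proof.
move=> Hm HJ Hij S1 S2.
have Hm' := HMin_G i Hm.
have A1 := M3' Hm' HJ S1 (k := j - i - 1).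
have A2 := M3' Hm' HJ S1 (k := j - i).
have E1 : iter j g x = iter (j - i - 1).+1 g (iter i g x).
  by rewrite -iterD (_ : (j - i - 1).+1 + i = j) //; lia.
have E2 : iter j.+1 g x = iter (j - i).+1 g (iter i g x).
  by rewrite -iterD (_ : (j - i).+1 + i = j.+1) //; lia.
rewrite E1 E2 in S2.
by clear -HX HJ S2 A1 A2; sides HJ.
Qed.

Lemma F1 z H k : HMin z -> is_hyperplane adj H -> separates adj H z (g z) -> 0 < k ->
  ~ separates adj (hyp_image g k H) z (g z).
Proof.
move=> Hm HH Hs Hk Hs'.
have T := proj2 (hi_sep k z (g z) HH) Hs.
rewrite -iterSr in T.
exact: (Ddisj (i := 0) (j := k) Hm (hi_hyp k HH) Hk Hs' T).
Qed.

Lemma F2 x y H : HMin x -> HMin y -> is_hyperplane adj H -> separates adj H x (g x) ->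
  exists K, (is_hyperplane adj K /\ separates adj K y (g y)) /\ same_orbit_hyp g H K.
Proof.
move=> Hmx Hmy HH Hs; apply: NNPP => Hno.
have HGi : forall i, is_hyperplane adj (hyp_image g i H) by move=> i; apply: hi_hyp.
have Si : forall i, separates adj (hyp_image g i H) (iter i g x) (iter i.+1 g x).
  by move=> i; have := proj2 (hi_sep i x (g x) HH) Hs; rewrite -iterSr.
have a1 : forall i m, separates adj (hyp_image g i H) (iter m g x) (iter m.+1 g x) -> m = i.
  move=> i m S; apply: NNPP => Hne.
  case: (ltngtP i m) => Hc.
  - exact: (Ddisj Hmx (HGi i) Hc (Si i) S).
  - exact: (Ddisj Hmx (HGi i) Hc S (Si i)).
  - by apply: Hne.
have a2 : forall i n, separates adj (hyp_image g i H) x (iter n g x) <-> i < n.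
  move=> i; elim=> [|n IH].
    by split=> // /(nsep_refl x (HGi i)).
  have X := sep_xor x (iter n g x) (iter n.+1 g x) (HGi i).
  case: (ltngtP i n) => Hc.
  - have S1 : separates adj (hyp_image g i H) x (iter n g x) by apply/IH.
    have S2 : ~ separates adj (hyp_image g i H) (iter n g x) (iter n.+1 g x).
      by move/a1 => e; subst; rewrite ltnn in Hc.
    split=> _; [lia | rewrite X; tauto].
  - have S1 : ~ separates adj (hyp_image g i H) x (iter n g x) by rewrite IH; lia.
    have S2 : ~ separates adj (hyp_image g i H) (iter n g x) (iter n.+1 g x).
      by move/a1 => e; subst; rewrite ltnn in Hc.
    split=> [Hs'|Hlt]; [exfalso; move: Hs'; rewrite X; tauto | lia].
  - subst n.
    have S1 : ~ separates adj (hyp_image g i H) x (iter i g x) by rewrite IH; lia.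
    split=> _; [lia | rewrite X; have := Si i; tauto].
have b1 : forall i m, ~ separates adj (hyp_image g i H) (iter m g y) (iter m.+1 g y).
  move=> i m S; case: (leqP m i) => Hmi.
  - have E : hyp_image g i H = hyp_image g m (hyp_image g (i - m) H) by rewrite -hi_add subnKC.
    rewrite E iterSr hi_sep in S; last exact: HGi.
    apply: Hno; exists (hyp_image g (i - m) H); split; first by split.
    by exists (i - m); left.
  - set n := m - i.
    have HK : is_hyperplane adj (himg (iter n gi) H) := himg_is_hyp (Gc' n) (Gc n) (Gi_adj n) HH.
    have EK : hyp_image g n (himg (iter n gi) H) = H.
      change (himg (iter n g) (himg (iter n gi) H) = H).
      by rewrite himg_comp himg_id // => z; exact: Gc'.
    have E1 : iter m g y = iter i g (iter n g y) by rewrite -iterD /n (_ : i + (m - i) = m) //; lia.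
    have E2 : iter m.+1 g y = iter i g (iter n.+1 g y) by rewrite -iterD /n (_ : i + (m - i).+1 = m.+1) //; lia.
    rewrite E1 E2 hi_sep // -{1}EK iterSr hi_sep // in S.
    apply: Hno; exists (himg (iter n gi) H); split; first by split.
    by exists n; right; rewrite EK.
have b2 : forall i n, ~ separates adj (hyp_image g i H) y (iter n g y).
  move=> i; elim=> [|n IH]; first exact: nsep_refl.
  by rewrite (sep_xor y (iter n g y) (iter n.+1 g y) (HGi i)); have := b1 i n; tauto.
set N := (d x y).*2.+1.
have c1 : forall i, i < N -> separates adj (hyp_image g i H) x y \/
          separates adj (hyp_image g i H) (iter N g x) (iter N g y).
  move=> i Hi; have A1 := proj2 (a2 i N) Hi; have B1 := b2 i N.
  have HGii := HGi i; by clear -HX HGii A1 B1; sides HGii.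
have [Lxy [NLxy LenLxy HLxy ILxy]] := sep_list x y.
have [LN [NLN LenLN HLN ILN]] := sep_list (iter N g x) (iter N g y).
rewrite dG in LenLN.
have ND : List.NoDup (List.map (fun i => hyp_image g i H) (List.seq 0 N)).
  apply: nodup_map_seq => i j Hij _ E.
  have := Si i; rewrite E => /a1 e; subst; by rewrite ltnn in Hij.
have Inc : List.incl (List.map (fun i => hyp_image g i H) (List.seq 0 N)) (Lxy ++ LN).
  move=> K /List.in_map_iff [i [<- /List.in_seq Hi]].
  have Hi' : i < N by apply/ltP; lia.
  apply: List.in_or_app; case: (c1 i Hi') => Hc.
  - by left; apply/(ILxy _ (HGi i)).
  - by right; apply/(ILN _ (HGi i)).
have := List.NoDup_incl_length ND Inc.
rewrite List.length_map List.length_seq List.length_app LenLxy LenLN /N; lia.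
Qed.

Lemma orbit_join H K1 K2 : same_orbit_hyp g H K1 -> same_orbit_hyp g H K2 ->
  exists n, K2 = hyp_image g n K1 \/ K1 = hyp_image g n K2.
Proof.
case=> a [E1|E1]; case=> b [E2|E2]; subst.
- case: (leqP a b) => Hab.
  + by exists (b - a); left; rewrite -hi_add subnK.
  + by exists (a - b); right; rewrite -hi_add subnK // ltnW.
- by exists (a + b); right; rewrite hi_add.
- by exists (b + a); left; rewrite hi_add.
- case: (leqP a b) => Hab.
  + exists (b - a); right; apply: (@hi_inj a).
    by rewrite E2 -hi_add subnKC.
  + exists (a - b); left; apply: (@hi_inj b).
    by rewrite -E2 -hi_add subnKC // ltnW.
Qed.

Lemma orbit_sym J K : same_orbit_hyp g J K -> same_orbit_hyp g K J.
Proof. by case=> n [E|E]; exists n; [right|left]. Qed.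

Lemma orbit_uniq z H K1 K2 : HMin z -> is_hyperplane adj K1 -> separates adj K1 z (g z) ->
  is_hyperplane adj K2 -> separates adj K2 z (g z) ->
  same_orbit_hyp g H K1 -> same_orbit_hyp g H K2 -> K1 = K2.
Proof.
move=> Hm HK1 S1 HK2 S2 O1 O2.
have [[|n] [E|E]] := orbit_join O1 O2.
- by rewrite E hi_0.
- by rewrite E hi_0.
- by exfalso; apply: (F1 (k := n.+1) Hm HK1 S1); rewrite -?E.
- by exfalso; apply: (F1 (k := n.+1) Hm HK2 S2); rewrite -?E.
Qed.

Definition fmap x y (Hx : HMin x) (Hy : HMin y) (J : Sep adj x (g x)) : Sep adj y (g y) :=
  let s := constructive_indefinite_description _
             (F2 Hx Hy (proj1 (proj2_sig J)) (proj2 (proj2_sig J))) in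
  exist _ (proj1_sig s) (proj1 (proj2_sig s)).

Lemma fmap_orb x y (Hx : HMin x) (Hy : HMin y) J :
  same_orbit_hyp g (sval J) (sval (fmap Hx Hy J)).
Proof. by rewrite /fmap; case: constructive_indefinite_description => K [[]]. Qed.

Lemma sep_eq x (J1 J2 : Sep adj x (g x)) : sval J1 = sval J2 -> J1 = J2.
Proof.
case: J1 J2 => [J1 p1] [J2 p2] /= E; subst.
by rewrite (proof_irrelevance _ p1 p2).
Qed.

Lemma main x y : HMin x -> HMin y ->
  exists f : Sep adj x (g x) -> Sep adj y (g y),
    [/\ bijective f,
        (forall J, same_orbit_hyp g (sval J) (sval (f J))) &
        (forall f' : Sep adj x (g x) -> Sep adj y (g y),
           bijective f' ->
           (forall J, same_orbit_hyp g (sval J) (sval (f' J))) ->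
           forall J, sval (f' J) = sval (f J))].
Proof.
move=> Hx Hy; exists (fmap Hx Hy); split.
- exists (fmap Hy Hx) => J; apply: sep_eq.
  + set K := fmap Hx Hy J.
    have O1 := fmap_orb Hy Hx K; have O2 := orbit_sym (fmap_orb Hx Hy J).
    case: (proj2_sig (fmap Hy Hx K)) => H1 H2; case: (proj2_sig J) => H3 H4.
    exact: (orbit_uniq Hx H1 H2 H3 H4 O1 O2).
  + set K := fmap Hy Hx J.
    have O1 := fmap_orb Hx Hy K; have O2 := orbit_sym (fmap_orb Hy Hx J).
    case: (proj2_sig (fmap Hx Hy K)) => H1 H2; case: (proj2_sig J) => H3 H4.
    exact: (orbit_uniq Hy H1 H2 H3 H4 O1 O2).
- exact: fmap_orb.
- move=> f' _ Hf' J.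
  case: (proj2_sig (f' J)) => H1 H2; case: (proj2_sig (fmap Hx Hy J)) => H3 H4.
  exact: (orbit_uniq Hy H1 H2 H3 H4 (Hf' J) (fmap_orb Hx Hy J)).
Qed.

End Group.
End Graph.

Theorem lemma3p4 (V : Type) (adj : V -> V -> Prop) (g : V -> V)
  (HX : median_graph adj) (Hg : automorphism adj g)
  (Hfree : free_action g) (Hcosp : cospecial adj g)
  (x y : V) (Hx : in_Min adj g x) (Hy : in_Min adj g y) :
  exists f : Sep adj x (g x) -> Sep adj y (g y),
    [/\ bijective f,
        (forall J, same_orbit_hyp g (sval J) (sval (f J))) &
        (forall f' : Sep adj x (g x) -> Sep adj y (g y),
           bijective f' ->
           (forall J, same_orbit_hyp g (sval J) (sval (f' J))) ->
           forall J, sval (f' J) = sval (f J))].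
Proof.
have HM : forall z, in_Min adj g z -> HMin HX g z.
  move=> z [n [Hn Hmin]] w.
  rewrite -(is_dist_d HX Hn); apply: Hmin; exact: d_spec.
exact: (main Hg Hcosp (HM x Hx) (HM y Hy)).
Qed.
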